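(* Let $\mathcal{Z}\subset\mathbb{R}^n$ be closed and convex, and let $f:\mathcal{Z}\to\mathbb{R}^n$ be such that $-f$ is $\beta$-strongly monotone and globally $L$-Lipschitz. Consider, for $K>0$, the anti-windup approximation $$\dot z=F_K(z):=f(P_\mathcal{Z}(z))-\tfrac1K\big(z-P_\mathcal{Z}(z)\big),\qquad z\in\mathbb{R}^n.$$ Then for all $0<K<4\beta/L^2$, every trajectory of this system converges to an equilibrium point $z^\star$, which is unique, and $P_\mathcal{Z}(z^\star)$ is the unique equilibrium of the projected dynamical system $\dot z=\Pi_\mathcal{Z}[f](z)$, $z\in\mathcal{Z}$.
   Context: $P_\mathcal{Z}$ is the Euclidean projection onto $\mathcal{Z}$. A map $F$ is $\beta$-strongly monotone on $\mathcal{C}$ if $\langle v-v',x-x'\rangle\ge\beta\|x-x'\|^2$ for all $x,x'\in\mathcal{C}$, $v\in F(x)$, $v'\in F(x')$. $T_x\mathcal{Z}$ is the tangent cone of $\mathcal{Z}$ at $x$, and $\Pi_\mathcal{Z}[f](x):=\arg\min_{v\in T_x\mathcal{Z}}\|v-f(x)\|$ for $x\in\mathcal{Z}$. An equilibrium of the projected system is a point $\bar z\in\mathcal{Z}$ such that the constant trajectory at $\bar z$ is a (Carathéodory) solution, i.e., $\Pi_\mathcal{Z}[f](\bar z)=0$. *)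

(* Defs.v *)
From HB Require Import structures.
From mathcomp Require Import all_boot all_order all_algebra.
From mathcomp Require Import all_classical all_reals all_analysis.
Set Implicit Arguments. Unset Strict Implicit. Unset Printing Implicit Defensive.
Import Order.TTheory GRing.Theory Num.Theory.
Import numFieldNormedType.Exports.
Local Open Scope classical_set_scope.
Local Open Scope ring_scope.

Section Defs.
Variables (R : realType) (n : nat).
Local Notation V := 'rV[R]_n.

(* Euclidean inner product and norm on R^n (the library norm on matrices
   is the max norm, so we define the Euclidean one explicitly). *)
Definition edot (u v : V) : R := \sum_(i < n) u ord0 i * v ord0 i.
Definition enorm (u : V) : R := Num.sqrt (edot u u).

Definition econvex (Z : set V) : Prop :=
  forall x y (t : R), Z x -> Z y -> 0 <= t <= 1 -> Z (t *: x + (1 - t) *: y).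

(* Euclidean projection onto Z: a point of Z minimizing the Euclidean
   distance to z (unique when Z is nonempty, closed and convex). *)
Definition eproj (Z : set V) (z : V) : V :=
  xget 0 [set p | Z p /\ forall y, Z y -> enorm (z - p) <= enorm (z - y)].

Definition strongly_monotone_on (C : set V) (F : V -> V) (beta : R) : Prop :=
  forall x x', C x -> C x' -> edot (F x - F x') (x - x') >= beta * enorm (x - x') ^+ 2.

Definition euclid_lipschitz_on (C : set V) (F : V -> V) (L : R) : Prop :=
  forall x x', C x -> C x' -> enorm (F x - F x') <= L * enorm (x - x').

Definition FK (Z : set V) (f : V -> V) (K : R) (z : V) : V :=
  f (eproj Z z) - K^-1 *: (z - eproj Z z).

Definition tangent_cone (Z : set V) (x : V) : set V :=
  closure [set v | exists t : R, exists2 y, Z y & 0 <= t /\ v = t *: (y - x)].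

(* Pi_Z[f](x) as the set of minimizers (argmin) over the tangent cone *)
Definition proj_field_argmin (Z : set V) (f : V -> V) (x : V) : set V :=
  [set v | tangent_cone Z x v /\
           forall w, tangent_cone Z x w -> enorm (v - f x) <= enorm (w - f x)].

Definition proj_equilibrium (Z : set V) (f : V -> V) (zb : V) : Prop :=
  Z zb /\ proj_field_argmin Z f zb = [set 0].

Definition is_trajectory (F : V -> V) (z : R -> V) : Prop :=
  {within `[0, +oo[, continuous z} /\
  forall t : R, 0 < t -> is_derive t 1 z (F (z t)).

End Defs.

(* Main.v *)
Require Import Defs.
From HB Require Import structures.
From mathcomp Require Import all_boot all_order all_algebra.
From mathcomp Require Import all_classical all_reals all_analysis.
From mathcomp Require Import ring lra.
Import Order.TTheory GRing.Theory Num.Theory.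
Import numFieldNormedType.Exports.
Local Open Scope classical_set_scope.
Local Open Scope ring_scope.

Section Helpers.
Context {R : realType} {n : nat}.
Local Notation V := 'rV[R]_n.
Implicit Types u v w : V.

Lemma edotC u v : edot u v = edot v u.
Proof. by apply: eq_bigr => i _; rewrite mulrC. Qed.

Lemma edotDl u v w : edot (u + v) w = edot u w + edot v w.
Proof. by rewrite /edot -big_split; apply: eq_bigr => i _; rewrite !mxE mulrDl. Qed.

Lemma edotDr u v w : edot w (u + v) = edot w u + edot w v.
Proof. by rewrite edotC edotDl ![edot _ w]edotC. Qed.

Lemma edotZl (a : R) u v : edot (a *: u) v = a * edot u v.
Proof. by rewrite /edot mulr_sumr; apply: eq_bigr => i _; rewrite !mxE mulrA. Qed.

Lemma edotZr (a : R) u v : edot u (a *: v) = a * edot u v.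
Proof. by rewrite edotC edotZl edotC. Qed.

Lemma edotNl u v : edot (- u) v = - edot u v.
Proof. by rewrite -scaleN1r edotZl mulN1r. Qed.

Lemma edotNr u v : edot u (- v) = - edot u v.
Proof. by rewrite edotC edotNl edotC. Qed.

Lemma edotBl u v w : edot (u - v) w = edot u w - edot v w.
Proof. by rewrite edotDl edotNl. Qed.

Lemma edotBr u v w : edot w (u - v) = edot w u - edot w v.
Proof. by rewrite edotDr edotNr. Qed.

Lemma edot0l v : edot 0 v = 0.
Proof. by rewrite -(scale0r (0 : V)) edotZl mul0r. Qed.

Lemma edot0r v : edot v 0 = 0.
Proof. by rewrite edotC edot0l. Qed.

Lemma edot_ge0 u : 0 <= edot u u.
Proof. by apply: sumr_ge0 => i _; rewrite -expr2 sqr_ge0. Qed.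

Lemma edot_eq0 u : edot u u = 0 -> u = 0.
Proof.
move=> H0; apply/rowP => i; rewrite mxE.
have H := psumr_eq0P (P := fun _ => true) (F := fun i => u ord0 i * u ord0 i).
have /eqP := H (fun j _ => ltac:(by rewrite -expr2 sqr_ge0)) H0 i isT.
by rewrite -expr2 sqrf_eq0 => /eqP.
Qed.


Lemma enorm_sq u : enorm u ^+ 2 = edot u u.
Proof. by rewrite sqr_sqrtr // edot_ge0. Qed.

Lemma enorm0 : enorm (0 : V) = 0.
Proof. by rewrite /enorm edot0l sqrtr0. Qed.

Lemma enorm_ge0 u : 0 <= enorm u.
Proof. exact: sqrtr_ge0. Qed.

Lemma enorm_leP u e : 0 <= e -> (enorm u <= e) = (edot u u <= e ^+ 2).
Proof. by move=> e0; rewrite -enorm_sq ler_sqr // nnegrE ?enorm_ge0. Qed.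

Lemma edot_sq_le u v : edot u v ^+ 2 <= edot u u * edot v v.
Proof.
have [v0|vpos] := eqVneq (edot v v) 0.
  by rewrite (edot_eq0 _ v0) !edot0r expr0n /= mulr0.
have vv0 : 0 < edot v v by rewrite lt_def vpos edot_ge0.
have H : 0 <= edot v v * (edot v v * edot u u - edot u v ^+ 2).
  have := edot_ge0 (edot v v *: u - edot u v *: v).
  rewrite !(edotBl, edotBr, edotZl, edotZr) (edotC v u).
  set a := edot v v; set b := edot u u; set c := edot u v.
  by congr (0 <= _); rewrite expr2; ring.
by move: H; rewrite pmulr_rge0 // subr_ge0 mulrC.
Qed.

Lemma edot_le u v : edot u v <= enorm u * enorm v.
Proof.
have [h|h] := leP (edot u v) 0.
  by apply: le_trans h _; rewrite mulr_ge0 // enorm_ge0.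
rewrite -ler_sqr; last 2 first.
- by rewrite nnegrE ltW.
- by rewrite nnegrE mulr_ge0 ?enorm_ge0.
rewrite exprMn !enorm_sq; exact: edot_sq_le.
Qed.

Lemma enormD u v : enorm (u + v) <= enorm u + enorm v.
Proof.
rewrite enorm_leP ?addr_ge0 ?enorm_ge0 //.
rewrite !(edotDl, edotDr) (edotC v u) sqrrD !enorm_sq.
have := edot_le u v; lra.
Qed.

Lemma coord_sq_le u i : u ord0 i ^+ 2 <= edot u u.
Proof.
by rewrite /edot (bigD1 i) //= -expr2 lerDl sumr_ge0 // => j _; rewrite -expr2 sqr_ge0.
Qed.

Lemma coord_le u i : `|u ord0 i| <= enorm u.
Proof.
by rewrite -ler_sqr ?nnegrE ?enorm_ge0 // (real_normK (num_real _)) enorm_sq coord_sq_le.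
Qed.

Lemma edot_le_bound u e : (forall i, `|u ord0 i| <= e) -> edot u u <= n%:R * e ^+ 2.
Proof.
move=> H; rewrite /edot.
apply: le_trans (_ : \sum_(i < n) e ^+ 2 <= _).
  apply: ler_sum => i _; rewrite -expr2 -(real_normK (num_real (u ord0 i))) ler_sqr ?nnegrE ?H //.
  by apply: le_trans (H i).
by rewrite sumr_const card_ord mulr_natl.
Qed.

Lemma young u v : 2 * edot u v <= edot u u + edot v v.
Proof.
have := edot_ge0 (u - v); rewrite !(edotBl, edotBr) (edotC v u); lra.
Qed.


Lemma enorm_sym (x y : V) : enorm (x - y) = enorm (y - x).
Proof. by rewrite /enorm -opprB edotNl edotNr opprK. Qed.

Lemma enorm_ball (x y : V) e : enorm (x - y) < e -> ball x e y.
Proof.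
move=> H; have e0 : 0 < e by apply: le_lt_trans H; exact: enorm_ge0.
split => // i j; rewrite (ord1 i) /ball /=.
have := coord_le (x - y) j; rewrite !mxE => h; exact: le_lt_trans h H.
Qed.

Lemma ball_coord (x y : V) e j : ball x e y -> `|x ord0 j - y ord0 j| < e.
Proof. by move=> [_ H]; exact: H. Qed.

Lemma ball_enorm (x y : V) e : 0 <= e -> ball x e y -> enorm (x - y) <= Num.sqrt (n%:R) * e.
Proof.
move=> e0 B; rewrite enorm_leP ?mulr_ge0 ?sqrtr_ge0 // exprMn sqr_sqrtr ?ler0n //.
apply: edot_le_bound => i; rewrite !mxE; apply: ltW; exact: ball_coord B.
Qed.

Lemma ecauchy_cvg (u : nat -> V) :
  (forall e, 0 < e -> exists N, forall k m, (N <= k)%N -> (N <= m)%N -> enorm (u k - u m) <= e) ->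
  exists p, forall e, 0 < e -> exists N, forall k, (N <= k)%N -> enorm (u k - p) <= e.
Proof.
move=> H.
have cF : cauchy (u @ \oo).
  apply: cauchy_exP => e e0.
  have e2 : 0 < e / 2 by rewrite divr_gt0.
  have [N HN] := H (e / 2) e2.
  exists (u N); exists N => // k /= Nk; apply: enorm_ball.
  apply: le_lt_trans (HN N k (leqnn N) Nk) _.
  by rewrite ltr_pdivrMr // ltr_pMr // ltr1n.
have [p Hp] := (cvg_ex (u @ \oo)).1 (cauchy_cvg _ cF).
exists p => e e0.
pose e' := e / (Num.sqrt (n%:R) + 1).
have s0 : 0 < Num.sqrt (n%:R) + 1 :> R by have := sqrtr_ge0 (n%:R : R); lra.
have e'0 : 0 < e' by rewrite divr_gt0.
have [N _ HN] := Hp _ (nbhsx_ballx p e' e'0).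
exists N => k Nk.
have := @ball_enorm p (u k) e' (ltW e'0) (HN k Nk).
rewrite enorm_sym => h; apply: le_trans h _.
rewrite /e' mulrA ler_pdivrMr // mulrC ler_pM2l // lerDl //.
Qed.


Lemma closed_lim (Z : set V) (u : nat -> V) p : closed Z -> (forall k, Z (u k)) ->
  (forall e, 0 < e -> exists N, forall k, (N <= k)%N -> enorm (u k - p) <= e) -> Z p.
Proof.
move=> cZ Zu Hp; apply: cZ => B /nbhs_ballP [e e0 HB].
have e2 : 0 < e / 2 by rewrite divr_gt0.
have [N HN] := Hp _ e2.
exists (u N); split => //; apply: HB; apply: enorm_ball; rewrite enorm_sym.
apply: le_lt_trans (HN N (leqnn N)) _.
by rewrite ltr_pdivrMr // ltr_pMr // ltr1n.
Qed.

Lemma small_inv (eta : R) : 0 < eta -> exists N, forall k, (N <= k)%N -> (k.+1%:R)^-1 <= eta.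
Proof.
move=> e0; exists (Num.Def.archi_bound eta^-1) => k Hk.
have h1 := archi_boundP (ltW (ltac:(by rewrite invr_gt0) : 0 < eta^-1)).
rewrite -[leRHS](invrK eta) lef_pV2 ?posrE ?invr_gt0 ?ltr0Sn //.
apply: ltW; apply: lt_le_trans h1 _; rewrite ler_nat; exact: leqW.
Qed.

Lemma proj_exists (Z : set V) z : Z !=set0 -> closed Z -> econvex Z ->
  exists p, Z p /\ forall y, Z y -> enorm (z - p) <= enorm (z - y).
Proof.
move=> [y0 Zy0] cZ vZ.
pose S := [set r | exists2 y, Z y & r = enorm (z - y)].
have hS : has_inf S.
  split; first by exists (enorm (z - y0)); exists y0.
  by exists 0 => r [y _ ->]; exact: enorm_ge0.
pose d := inf S.
have dle y : Z y -> d <= enorm (z - y).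
  by move=> Zy; apply: ge_inf; [exact: hS.2 | exists y].
have d0 : 0 <= d by apply: lb_le_inf; [exact: hS.1 | move=> r [y _ ->]; exact: enorm_ge0].
have ex k : exists y, Z y /\ enorm (z - y) <= d + (k.+1%:R)^-1.
  have [r [y Zy ->] H] := inf_adherent (ltac:(by rewrite invr_gt0 ltr0Sn) : 0 < (k.+1%:R : R)^-1) hS.
  by exists y; split => //; apply: ltW.
have [y Hy] := choice ex.
have par a b da db : Z a -> Z b -> 0 <= da -> 0 <= db ->
    enorm (z - a) <= d + da -> enorm (z - b) <= d + db ->
    edot (a - b) (a - b) <= 4 * d * da + 2 * da ^+ 2 + 4 * d * db + 2 * db ^+ 2.
  move=> Za Zb da0 db0 ha hb.
  have t01 : 0 <= (1 / 2 : R) <= 1.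
    by rewrite divr_ge0 ?ler01 ?ler0n //= ler_pdivrMr ?ltr0Sn // mul1r ler1n.
  have Zm := vZ a b (1 / 2) Za Zb t01.
  have hm := dle _ Zm.
  have E1 : a - b = (z - b) - (z - a) by apply/rowP => i; rewrite !mxE; ring.
  have E2 : z - ((1 / 2) *: a + (1 - 1 / 2) *: b) =
      (1 / 2) *: (z - a) + (1 - 1 / 2) *: (z - b) by apply/rowP => i; rewrite !mxE; ring.
  have hm2 : d ^+ 2 <= edot (z - ((1 / 2) *: a + (1 - 1 / 2) *: b)) (z - ((1 / 2) *: a + (1 - 1 / 2) *: b)).
    by rewrite -enorm_sq ler_sqr ?nnegrE ?enorm_ge0.
  have ha2 : edot (z - a) (z - a) <= (d + da) ^+ 2.
    by rewrite -enorm_leP ?addr_ge0.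
  have hb2 : edot (z - b) (z - b) <= (d + db) ^+ 2.
    by rewrite -enorm_leP ?addr_ge0.
  move: hm2 ha2 hb2; rewrite E2 E1.
  move: (z - a) (z - b) => wa wb.
  rewrite !(edotDl, edotDr, edotZl, edotZr, edotBl, edotBr, edotNl, edotNr) !(edotC wb wa).
  set A := edot wa wa; set B := edot wb wb; set C := edot wa wb => hm2 ha2 hb2.
  rewrite !expr2 in ha2 hb2 hm2 *; nra.
have cauchy_y : forall e, 0 < e -> exists N, forall k m, (N <= k)%N -> (N <= m)%N ->
    enorm (y k - y m) <= e.
  move=> e e0.
  pose eta := Num.min 1 (e ^+ 2 / (8 * d + 4)).
  have eta0 : 0 < eta by rewrite lt_min ltr01 divr_gt0 ?exprn_gt0 //; lra.
  have eta1 : eta <= 1 by rewrite ge_min lexx.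
  have eta2 : eta <= e ^+ 2 / (8 * d + 4) by rewrite ge_min lexx orbT.
  have eta3 : (8 * d + 4) * eta <= e ^+ 2 by rewrite mulrC -ler_pdivlMr //; lra.
  have [N HN] := small_inv _ eta0.
  exists N => k m Nk Nm.
  have [Zk hk] := Hy k; have [Zm hm] := Hy m.
  have dk0 : 0 <= (k.+1%:R)^-1 :> R by rewrite invr_ge0 ler0n.
  have dm0 : 0 <= (m.+1%:R)^-1 :> R by rewrite invr_ge0 ler0n.
  have := par _ _ _ _ Zk Zm dk0 dm0 hk hm.
  have := HN k Nk; have := HN m Nm.
  move: dk0 dm0; set a := (k.+1%:R)^-1; set b := (m.+1%:R)^-1 => dk0 dm0 hb ha H.
  rewrite enorm_leP; last exact: ltW.
  apply: le_trans H _.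
  rewrite !expr2 in eta3 *; nra.
have [p Hp] := ecauchy_cvg y cauchy_y.
have Zp : Z p := @closed_lim Z y p cZ (fun k => (Hy k).1) Hp.
exists p; split => // w Zw; apply: le_trans (dle _ Zw).
apply/ler_addgt0Pr => e e0.
have e2 : 0 < e / 2 by rewrite divr_gt0.
have [N1 HN1] := Hp _ e2.
have [N2 HN2] := small_inv _ e2.
pose k := maxn N1 N2.
have hk1 := HN1 k (leq_maxl _ _).
have hk2 := HN2 k (leq_maxr _ _).
have hk := (Hy k).2.
have E : z - p = (z - y k) + (y k - p) by rewrite addrA subrK.
rewrite E; apply: le_trans (enormD _ _) _.
move: hk1 hk2 hk; move: (enorm (z - y k)) (enorm (y k - p)) ((k.+1%:R)^-1 : R) => A B C; lra.
Qed.

Lemma proj_vi (Z : set V) z p : econvex Z -> Z p ->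
  (forall y, Z y -> enorm (z - p) <= enorm (z - y)) ->
  forall y, Z y -> edot (z - p) (y - p) <= 0.
Proof.
move=> vZ Zp Hp y Zy.
have key t : 0 <= t <= 1 ->
    edot (z - p) (z - p) <= edot ((z - p) - t *: (y - p)) ((z - p) - t *: (y - p)).
  move=> ht; have := Hp _ (vZ y p t Zy Zp ht).
  have -> : z - (t *: y + (1 - t) *: p) = (z - p) - t *: (y - p)
    by apply/rowP => i; rewrite !mxE; ring.
  by rewrite enorm_leP ?enorm_ge0 // enorm_sq.
move: key; move: (z - p) (y - p) => w v key.
rewrite leNgt; apply/negP => a0.
have b0 : 0 < edot v v.
  rewrite lt_def edot_ge0 andbT; apply/negP => /eqP /edot_eq0 v0.
  by move: a0; rewrite v0 edot0r ltxx.
pose t := Num.min 1 (edot w v / edot v v).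
have t0 : 0 < t by rewrite lt_min ltr01 divr_gt0.
have t1 : t <= 1 by rewrite ge_min lexx.
have tb : t * edot v v <= edot w v by rewrite -ler_pdivlMr // ge_min lexx orbT.
have := key t (ltac:(by rewrite (ltW t0) t1)).
rewrite !(edotBl, edotBr, edotZl, edotZr) (edotC v w).
clearbody t; move: tb t0 a0 b0; move: (edot w v) (edot v v) (edot w w) => a b c tb t0 a0 b0 h.
have : t * (2 * a - t * b) <= 0 by rewrite ?expr2 in h; nra.
rewrite pmulr_rle0 //; lra.
Qed.


Lemma eproj_spec (Z : set V) z : Z !=set0 -> closed Z -> econvex Z ->
  Z (eproj Z z) /\ forall y, Z y -> edot (z - eproj Z z) (y - eproj Z z) <= 0.
Proof.
move=> ne cZ vZ; have [p Hp] := proj_exists Z z ne cZ vZ.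
have : [set p | Z p /\ forall y, Z y -> enorm (z - p) <= enorm (z - y)] (eproj Z z).
  by apply: xgetPex; exists p.
by move=> [Zq Hq]; split => //; apply: proj_vi.
Qed.

Lemma eproj_unique (Z : set V) z p : Z !=set0 -> closed Z -> econvex Z -> Z p ->
  (forall y, Z y -> edot (z - p) (y - p) <= 0) -> eproj Z z = p.
Proof.
move=> ne cZ vZ Zp Hp; have [Zq Hq] := eproj_spec Z z ne cZ vZ.
move: (eproj Z z) Zq Hq => q Zq Hq.
have h1 := Hp q Zq; have h2 := Hq p Zp.
have E1 : q - p = (z - p) - (z - q) by apply/rowP => i; rewrite !mxE; ring.
have E2 : p - q = - (q - p) by rewrite opprB.
have : edot (q - p) (q - p) <= 0.
  rewrite {1}E1 edotBl; rewrite E2 edotNr in h2; lra.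
move=> h; apply/eqP; rewrite -subr_eq0; apply/eqP/edot_eq0.
by apply/eqP; rewrite eq_le h edot_ge0.
Qed.

Lemma eproj_firm (Z : set V) x x' : Z !=set0 -> closed Z -> econvex Z ->
  0 <= edot (eproj Z x - eproj Z x') ((x - eproj Z x) - (x' - eproj Z x')).
Proof.
move=> ne cZ vZ.
have [Zp Hp] := eproj_spec Z x ne cZ vZ; have [Zp' Hp'] := eproj_spec Z x' ne cZ vZ.
have h1 := Hp _ Zp'; have h2 := Hp' _ Zp.
move: (eproj Z x) (eproj Z x') Zp Zp' h1 h2 => p p' _ _ h1 h2.
have E : p' - p = - (p - p') by rewrite opprB.
rewrite E edotNr in h1.
rewrite edotBr (edotC _ (x - p)) (edotC _ (x' - p')); lra.
Qed.

Lemma eproj_nonexp (Z : set V) x x' : Z !=set0 -> closed Z -> econvex Z ->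
  edot (eproj Z x - eproj Z x') (eproj Z x - eproj Z x') <= edot (x - x') (x - x').
Proof.
move=> ne cZ vZ; have h := eproj_firm Z x x' ne cZ vZ.
have E : x - x' = (eproj Z x - eproj Z x') + ((x - eproj Z x) - (x' - eproj Z x'))
  by apply/rowP => i; rewrite !mxE; ring.
rewrite E; move: h; move: (eproj Z x - eproj Z x') ((x - eproj Z x) - (x' - eproj Z x')) => a b h.
rewrite !(edotDl, edotDr) (edotC b a); have := edot_ge0 b; lra.
Qed.

Lemma banach (Z : set V) (G : V -> V) (q : R) x0 : closed Z -> Z x0 ->
  (forall x, Z x -> Z (G x)) -> 0 <= q -> q < 1 ->
  (forall x y, Z x -> Z y -> enorm (G x - G y) <= q * enorm (x - y)) ->
  exists p, Z p /\ G p = p.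
Proof.
move=> cZ Zx0 ZG q0 q1 HG.
pose u k := iter k G x0.
have Zu k : Z (u k) by elim: k => [|k IH] //=; exact: ZG.
pose D := enorm (u 1%N - u 0%N).
have step k : enorm (u k.+1 - u k) <= D * q ^+ k.
  elim: k => [|k IH]; first by rewrite expr0 mulr1.
  have -> : u k.+2 - u k.+1 = G (u k.+1) - G (u k) by [].
  apply: le_trans (HG _ _ (Zu _) (Zu _)) _.
  by rewrite exprS mulrCA; apply: ler_wpM2l.
have D0 : 0 <= D by exact: enorm_ge0.
have bnd j k : enorm (u (j + k)%N - u k) * (1 - q) <= D * (q ^+ k - q ^+ (j + k)).
  elim: j => [|j IH]; first by rewrite add0n !subrr enorm0 mul0r mulr0.
  have E : u (j.+1 + k)%N - u k = (u (j + k).+1 - u (j + k)%N) + (u (j + k)%N - u k)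
    by rewrite addSn addrA subrK.
  rewrite E; apply: le_trans (ler_wpM2r _ (enormD _ _)) _; first by lra.
  have := step (j + k)%N; rewrite addSn exprS.
  move: IH; move: (enorm (u (j + k).+1 - u (j + k)%N)) (enorm (u (j + k)%N - u k)) (q ^+ (j + k)) (q ^+ k) => a b c d IH h.
  have : a * (1 - q) <= D * c * (1 - q) by rewrite ler_pM2r ?subr_gt0.
  nra.
have qk : forall e, 0 < e -> exists N, forall k, (N <= k)%N -> q ^+ k < e.
  move=> e e0.
  have /cvgrPdist_lt /(_ e e0) [N _ HN] := cvg_expr (ltac:(by rewrite ger0_norm) : `|q| < 1).
  exists N => k /HN /=; rewrite sub0r normrN ger0_norm //; exact: exprn_ge0.
have cauchy : forall e, 0 < e -> exists N, forall k m, (N <= k)%N -> (N <= m)%N ->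
    enorm (u k - u m) <= e.
  move=> e e0.
  have e1 : 0 < e * (1 - q) / (D + 1) by rewrite divr_gt0 ?mulr_gt0 ?subr_gt0 //; lra.
  have [N HN] := qk _ e1.
  have gen k m : (N <= k)%N -> (k <= m)%N -> enorm (u m - u k) <= e.
    move=> Nk km; have := bnd (m - k)%N k; rewrite subnK //.
    have := HN k Nk; have := exprn_ge0 (m - k + k)%N q0; rewrite subnK //.
    move: (enorm (u m - u k)) (q ^+ k) (q ^+ m) (enorm_ge0 (u m - u k)) => a b c a0 c0 hb h.
    have hb' : b * (D + 1) < e * (1 - q) by rewrite -ltr_pdivlMr //; lra.
    have : a * (1 - q) <= e * (1 - q) by nra.
    by rewrite ler_pM2r ?subr_gt0.
  exists N => k m Nk Nm.
  have [km|mk] := leqP k m.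
    by rewrite enorm_sym; exact: gen.
  exact: gen Nm (ltnW mk).
have [p Hp] := ecauchy_cvg u cauchy.
have Zp : Z p := @closed_lim Z u p cZ Zu Hp.
exists p; split => //.
have : enorm (G p - p) <= 0.
  apply/ler_addgt0Pr => e e0; rewrite add0r.
  have e2 : 0 < e / 2 by rewrite divr_gt0.
  have [N HN] := Hp _ e2.
  have E : G p - p = (G p - G (u N)) + (u N.+1 - p) by rewrite addrA subrK.
  rewrite E; apply: le_trans (enormD _ _) _.
  have h1 := HG _ _ Zp (Zu N); have h2 := HN N (leqnn N); have h3 := HN N.+1 (leqnSn N).
  rewrite enorm_sym in h2.
  have := enorm_ge0 (p - u N).
  move: h1 h2 h3; move: (enorm (G p - G (u N))) (enorm (p - u N)) (enorm (u N.+1 - p)) => a b c h1 h2 h3 b0.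
  have : q * b <= b by rewrite ler_piMl //; lra.
  lra.
move=> h; apply/eqP; rewrite -subr_eq0; apply/eqP/edot_eq0.
apply/eqP; rewrite eq_le edot_ge0 andbT -enorm_sq.
have := enorm_ge0 (G p - p) => h0.
have -> : enorm (G p - p) = 0 by apply/eqP; rewrite eq_le h h0.
by rewrite expr0n.
Qed.


Lemma enorm_le_sq u w : (enorm u <= enorm w) = (edot u u <= edot w w).
Proof. by rewrite enorm_leP ?enorm_ge0 // enorm_sq. Qed.

Lemma vi_unique (Z : set V) (f : V -> V) beta p q : 0 < beta ->
  strongly_monotone_on Z (fun x => - f x) beta -> Z p -> Z q ->
  (forall y, Z y -> edot (f p) (y - p) <= 0) ->
  (forall y, Z y -> edot (f q) (y - q) <= 0) -> p = q.
Proof.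
move=> b0 sm Zp Zq Hp Hq.
have h := sm p q Zp Zq; have h1 := Hp q Zq; have h2 := Hq p Zp.
have E : q - p = - (p - q) by rewrite opprB.
rewrite E edotNr in h1.
rewrite -opprD edotNl edotDl edotNl enorm_sq in h.
have : beta * edot (p - q) (p - q) <= 0 by lra.
rewrite pmulr_rle0 // => h3; apply/eqP; rewrite -subr_eq0; apply/eqP/edot_eq0.
by apply/eqP; rewrite eq_le h3 edot_ge0.
Qed.

Lemma zero_in_cone (Z : set V) x : Z x -> tangent_cone Z x 0.
Proof.
move=> Zx; apply: subset_closure; exists 0; exists x => //.
by rewrite lexx scale0r.
Qed.

Lemma tcone_le (Z : set V) x c : Z x -> (forall y, Z y -> edot c (y - x) <= 0) ->
  forall v, tangent_cone Z x v -> edot v c <= 0.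
Proof.
move=> Zx H v Tv; rewrite leNgt; apply/negP => pos.
set a := edot v c in pos.
set S := Num.sqrt (n%:R : R) * enorm c.
have S0 : 0 <= S by rewrite mulr_ge0 ?sqrtr_ge0 ?enorm_ge0.
pose e := a / (2 * (S + 1)).
have e0 : 0 < e by rewrite divr_gt0 //; lra.
have eS : 2 * (e * S) + 2 * e = a.
  rewrite /e; field; lra.
have [w [[t [y Zy [t0 ->]]] Bw]] := Tv (ball v e) (nbhsx_ballx v e e0).
have h1 : edot (t *: (y - x)) c <= 0.
  by rewrite edotZl edotC; apply: mulr_ge0_le0 => //; apply: H.
have h2 := @ball_enorm v (t *: (y - x)) e (ltW e0) Bw.
have h3 := edot_le (v - t *: (y - x)) c.
have h4 : enorm (v - t *: (y - x)) * enorm c <= e * S.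
  rewrite /S mulrA (mulrC e); apply: ler_wpM2r => //; exact: enorm_ge0.
move: h3; rewrite edotBl -/a => h3.
lra.
Qed.

Lemma equil_vi (Z : set V) (f : V -> V) x : proj_equilibrium Z f x ->
  forall y, Z y -> edot (f x) (y - x) <= 0.
Proof.
move=> [Zx E] y Zy.
have : proj_field_argmin Z f x 0 by rewrite E.
move=> [_ H0].
have Tw s : 0 <= s -> tangent_cone Z x (s *: (y - x)).
  by move=> s0; apply: subset_closure; exists s; exists y.
move: Tw; move: (y - x) (f x) H0 => d c H0 Tw.
rewrite leNgt; apply/negP => pos.
have b0 : 0 < edot d d.
  rewrite lt_def edot_ge0 andbT; apply/negP => /eqP /edot_eq0 v0.
  by move: pos; rewrite v0 edot0r ltxx.
pose t := edot c d / edot d d.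
have t0 : 0 < t by rewrite divr_gt0.
have tb : t * edot d d = edot c d by rewrite /t mulrAC -mulrA divff ?mulr1 // gt_eqF.
have := H0 _ (Tw t (ltW t0)); rewrite enorm_le_sq sub0r edotNl edotNr opprK.
rewrite !(edotBl, edotBr, edotZl, edotZr) (edotC d c).
move=> h.
have : 0 <= t * (t * edot d d - 2 * edot c d) by nra.
rewrite pmulr_rge0 //; lra.
Qed.

Lemma vi_equil (Z : set V) (f : V -> V) x : Z x ->
  (forall y, Z y -> edot (f x) (y - x) <= 0) -> proj_equilibrium Z f x.
Proof.
move=> Zx H; split => //.
have Hc := @tcone_le Z x (f x) Zx H.
apply/seteqP; split => v /=.
  move=> [Tv Hv]; have := Hv 0 (@zero_in_cone Z x Zx).
  rewrite enorm_le_sq sub0r edotNl edotNr opprK.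
  rewrite !(edotBl, edotBr) (edotC (f x) v) => h.
  have := Hc v Tv => h2.
  apply: edot_eq0; apply/eqP; rewrite eq_le edot_ge0 andbT; lra.
move=> ->; split; first exact: (@zero_in_cone Z x Zx).
move=> w Tw; rewrite enorm_le_sq sub0r edotNl edotNr opprK.
rewrite !(edotBl, edotBr) (edotC (f x) w).
have := Hc w Tw; have := edot_ge0 w; lra.
Qed.


Lemma young_s u v (s : R) : 0 < s -> edot u v <= s / 2 * edot u u + (2 * s)^-1 * edot v v.
Proof.
move=> s0; have := edot_ge0 (s *: u - v).
rewrite !(edotBl, edotBr, edotZl, edotZr) (edotC v u) => h.
have h2 : 2 * s * edot u v <= s ^+ 2 * edot u u + edot v v by rewrite expr2; lra.
rewrite -(ler_pM2l (_ : 0 < 2 * s)); last by rewrite mulr_gt0.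
apply: le_trans h2 _; rewrite le_eqVlt; apply/orP; left; apply/eqP.
by field; rewrite gt_eqF.
Qed.

Lemma fk_decay (Z : set V) (f : V -> V) (beta L K : R) zs :
  Z !=set0 -> closed Z -> econvex Z -> 0 < beta -> 0 < L ->
  strongly_monotone_on Z (fun x => - f x) beta -> euclid_lipschitz_on Z f L ->
  0 < K -> K < 4 * beta / L ^+ 2 ->
  exists2 c, 0 < c & forall z,
    edot (FK Z f K z - FK Z f K zs) (z - zs) <= - c * edot (z - zs) (z - zs).
Proof.
move=> ne cZ vZ b0 L0 sm lip K0 KL.
pose s := K / 4 + beta / L ^+ 2.
have s0 : 0 < s by rewrite addr_gt0 ?divr_gt0 ?exprn_gt0.
pose c1 := beta - s * L ^+ 2 / 2.
pose c2 := K^-1 - (2 * s)^-1.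
have L2 : 0 < L ^+ 2 by rewrite exprn_gt0.
have hK : K * L ^+ 2 < 4 * beta by rewrite -ltr_pdivlMr.
have c10 : 0 < c1.
  have : s * L ^+ 2 = K * L ^+ 2 / 4 + beta by rewrite /s; field; rewrite gt_eqF.
  rewrite /c1 => ->; lra.
have c20 : 0 < c2.
  rewrite /c2 subr_gt0 ltf_pV2 ?posrE ?mulr_gt0 //.
  have : 2 * s = K / 2 + 2 * (beta / L ^+ 2).
    by rewrite /s; field; rewrite gt_eqF.
  move=> ->; move: KL; rewrite -mulrA; lra.
pose m := Num.min c1 c2.
have m0 : 0 < m by rewrite lt_min c10 c20.
have mc1 : m <= c1 by rewrite ge_min lexx.
have mc2 : m <= c2 by rewrite ge_min lexx orbT.
exists (m / 2); first by rewrite divr_gt0.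
move=> z.
have [ZPz _] := eproj_spec Z z ne cZ vZ.
have [ZPzs _] := eproj_spec Z zs ne cZ vZ.
have hab := eproj_firm Z z zs ne cZ vZ.
have hsm := sm _ _ ZPz ZPzs.
have hlip := lip _ _ ZPz ZPzs.
have E1 : z - zs = (eproj Z z - eproj Z zs) + ((z - eproj Z z) - (zs - eproj Z zs))
  by apply/rowP => i; rewrite !mxE; ring.
have E2 : FK Z f K z - FK Z f K zs = (f (eproj Z z) - f (eproj Z zs)) - K^-1 *: ((z - eproj Z z) - (zs - eproj Z zs))
  by apply/rowP => i; rewrite !mxE; ring.
have E3 : - f (eproj Z z) - - f (eproj Z zs) = - (f (eproj Z z) - f (eproj Z zs))
  by apply/rowP => i; rewrite !mxE; ring.
rewrite E3 edotNl enorm_sq in hsm.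
rewrite enorm_leP ?mulr_ge0 ?enorm_ge0 ?(ltW L0) // exprMn enorm_sq in hlip.
rewrite E1 E2.
move: hab hsm hlip.
move: (f (eproj Z z) - f (eproj Z zs)) (eproj Z z - eproj Z zs) ((z - eproj Z z) - (zs - eproj Z zs)) => d a b hab hsm hlip.
have h2 := young_s d b s s0.
have h3 : s / 2 * edot d d <= s / 2 * (L ^+ 2 * edot a a).
  by apply: ler_wpM2l => //; rewrite divr_ge0 ?ltW.
have h1 : 0 <= K^-1 * edot a b by rewrite mulr_ge0 // invr_ge0 ltW.
have h4 : m * edot a a <= c1 * edot a a by apply: ler_wpM2r => //; exact: edot_ge0.
have h5 : m * edot b b <= c2 * edot b b by apply: ler_wpM2r => //; exact: edot_ge0.
have h6 : m / 2 * (edot a a + 2 * edot a b + edot b b) <= m / 2 * (2 * (edot a a + edot b b)).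
  apply: ler_wpM2l; first by rewrite divr_ge0 ?ltW.
  have := young a b; lra.
rewrite !(edotDl, edotDr, edotBl, edotBr, edotNl, edotNr, edotZl, edotZr) (edotC b a).
rewrite /c1 /c2 in h4 h5.
move: h1 h2 h3 h4 h5 h6 hsm hlip.
move: (edot a a) (edot b b) (edot a b) (edot d a) (edot d b) (edot d d) => A B C X Y W.
move=> h1 h2 h3 h4 h5 h6 hsm hlip.
lra.
Qed.


Lemma is_derive_coord (z : R -> V) (t : R) (d : V) (i : 'I_n) :
  is_derive t (1:R) z d -> is_derive t (1:R) (fun s => z s ord0 i) (d ord0 i).
Proof.
move=> [dz Dz].
have H : (fun h : R => h^-1 *: (((fun s => z s ord0 i) \o shift t) (h *: 1) - z t ord0 i)) =
    (fun M : V => M ord0 i) \o (fun h => h^-1 *: ((z \o shift t) (h *: 1) - z t)).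
  by apply/funext => h /=; rewrite !mxE.
have C : (fun h => h^-1 *: ((z \o shift t) (h *: 1) - z t)) @ 0^' --> d.
  by rewrite -Dz; exact: dz.
have C2 : ((fun M : V => M ord0 i) \o (fun h => h^-1 *: ((z \o shift t) (h *: 1) - z t))) @ 0^' --> d ord0 i.
  apply: continuous_cvg => //; exact: coord_continuous.
apply: DeriveDef; first by rewrite /derivable H; apply/cvg_ex; exists (d ord0 i).
by rewrite /derive H; apply: cvg_lim.
Qed.

Lemma is_derive_W (z : R -> V) zs (t : R) d : is_derive t (1:R) z d ->
  is_derive t (1:R) (fun s => edot (z s - zs) (z s - zs)) (2 * edot (z t - zs) d).
Proof.
move=> Hz.
have Hi i : is_derive t (1:R) (fun s => (z s ord0 i - zs ord0 i) ^+ 2)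
    ((2%:R * (z t ord0 i - zs ord0 i) ^+ 1) *: (d ord0 i - 0)).
  have H1 := is_deriveB (@is_derive_coord z t d i Hz) (is_derive_cst (zs ord0 i) t 1).
  have := is_deriveX 2 H1.
  by rewrite !fctE.
have -> : (fun s => edot (z s - zs) (z s - zs)) = \sum_(i < n) (fun s => (z s ord0 i - zs ord0 i) ^+ 2).
  by apply/funext => s; rewrite fct_sumE /edot; apply: eq_bigr => i _; rewrite !mxE expr2.
apply: is_derive_eq (is_derive_sum Hi) _.
rewrite /edot mulr_sumr; apply: eq_bigr => i _; rewrite !mxE subr0 expr1.
by change ((2 * (z t ord0 i - zs ord0 i)) * d ord0 i = 2 * ((z t ord0 i - zs ord0 i) * d ord0 i)); rewrite mulrA.
Qed.


Lemma traj_conv (F : V -> V) zs (c : R) : 0 < c ->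
  (forall z, edot (F z) (z - zs) <= - c * edot (z - zs) (z - zs)) ->
  forall z : R -> V, is_trajectory F z -> z t @[t --> +oo] --> zs.
Proof.
move=> c0 HF z [_ Hd].
pose W t := edot (z t - zs) (z t - zs).
pose dW t := 2 * edot (z t - zs) (F (z t)).
have dWP (t : R) : 0 < t -> is_derive t (1:R) W (dW t).
  by move=> t0; apply: is_derive_W; apply: Hd.
have W0 (t : R) : 0 <= W t by exact: edot_ge0.
have dWle (t : R) : dW t <= - (2 * c) * W t.
  by rewrite /dW edotC; have := HF (z t); rewrite -/(W t); lra.
have cont (s t : R) : 0 < s -> {within `[s, t], continuous W}.
  move=> s0; apply: derivable_within_continuous => x; rewrite in_itv /= => /andP [sx _].
  by have := dWP x (lt_le_trans s0 sx) => -[].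
have mono (s t : R) : 0 < s -> s <= t -> W t <= W s.
  move=> s0; rewrite le_eqVlt => /orP [/eqP -> //| st].
  have [x xin E] := MVT st (fun x xin => dWP x (lt_trans s0 (ltac:(by move: xin; rewrite in_itv /= => /andP [] ) : s < x))) (cont s t s0).
  have := dWle x; have := W0 x; have ts : 0 < t - s by rewrite subr_gt0.
  move=> h1 h2.
  have : dW x * (t - s) <= 0.
    apply: mulr_le0_ge0; last exact: ltW ts. have := mulr_ge0 (ltW c0) h1; lra.
  lra.
have small (e : R) : 0 < e -> exists2 T, 0 < T & W T <= e.
  move=> e0; pose T := 2 + W 1 / (c * e).
  have ce : 0 < c * e by rewrite mulr_gt0.
  have WT0 : 0 <= W 1 / (c * e) by rewrite divr_ge0 ?W0 ?ltW.
  have T1 : 1 < T by rewrite /T; lra.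
  have [x xin E] := MVT T1 (fun x xin => dWP x (lt_trans ltr01 (ltac:(by move: xin; rewrite in_itv /= => /andP [] ) : 1 < x))) (cont 1 T ltr01).
  have x1 : 1 < x by move: xin; rewrite in_itv /= => /andP [].
  have [Wx|Wx] := leP (W x) e; first by exists x => //; lra.
  exfalso.
  have h1 := dWle x.
  have h2 : dW x * (T - 1) <= - (2 * c * e) * (T - 1).
    rewrite ler_pM2r ?subr_gt0 //; nra.
  have h3 : c * e * (W 1 / (c * e)) = W 1 by rewrite mulrC -mulrA mulVf ?mulr1 // gt_eqF.
  have := W0 T; rewrite /T in h2 E *.
  nra.
move=> A /nbhs_ballP [r r0 HA].
have r2 : 0 < (r / 2) ^+ 2 by rewrite exprn_gt0 // divr_gt0.
have [T T0 WT] := small _ r2.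
exists T; split; first exact: num_real.
move=> t Tt; apply: HA; apply: enorm_ball; rewrite enorm_sym.
have Wt : W t <= (r / 2) ^+ 2 := le_trans (mono T t T0 (ltW Tt)) WT.
have : enorm (z t - zs) <= r / 2 by rewrite enorm_leP; [exact: Wt | rewrite divr_ge0 // ltW].

move=> h; apply: le_lt_trans h _; by rewrite ltr_pdivrMr // ltr_pMr // ltr1n.
Qed.

End Helpers.

Theorem theorem6p3 (R : realType) (n : nat) (Z : set 'rV[R]_n)
  (f : 'rV[R]_n -> 'rV[R]_n) (beta L : R) :
  Z !=set0 -> closed Z -> econvex Z ->
  0 < beta -> 0 < L ->
  strongly_monotone_on Z (fun x => - f x) beta ->
  euclid_lipschitz_on Z f L ->
  forall K : R, 0 < K -> K < 4 * beta / L ^+ 2 ->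
  exists zs : 'rV[R]_n,
    [/\ FK Z f K zs = 0,
        (forall z, FK Z f K z = 0 -> z = zs),
        (forall z : R -> 'rV[R]_n, is_trajectory (FK Z f K) z ->
           z t @[t --> +oo] --> zs),
        proj_equilibrium Z f (eproj Z zs) &
        (forall zb, proj_equilibrium Z f zb -> zb = eproj Z zs)].
Proof.
move=> ne cZ vZ b0 L0 sm lip K K0 KL.
have L2 : 0 < L ^+ 2 by rewrite exprn_gt0.
pose h := beta / L ^+ 2.
have h0 : 0 < h by rewrite divr_gt0.
have hL : h * L ^+ 2 = beta by rewrite /h mulrVK // unitfE gt_eqF.
pose G x := eproj Z (x + h *: f x).
pose rho := Num.max (1 - h * beta) 0.
have rho0 : 0 <= rho by rewrite le_max lexx orbT.
have rho1 : rho < 1.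
  rewrite gt_max ltr01 andbT; have := mulr_gt0 h0 b0; lra.
pose q := Num.sqrt rho.
have q0 : 0 <= q by exact: sqrtr_ge0.
have q1 : q < 1 by rewrite /q -sqrtr1 ltr_sqrt // ltr01.
have [x0 Zx0] := ne.
have ZG x : Z x -> Z (G x) by move=> _; exact: (eproj_spec Z _ ne cZ vZ).1.
have contr x y : Z x -> Z y -> enorm (G x - G y) <= q * enorm (x - y).
  move=> Zx Zy.
  have hsm := sm x y Zx Zy.
  have Ef : - f x - - f y = - (f x - f y) by apply/rowP => i; rewrite !mxE; ring.
  rewrite Ef edotNl enorm_sq in hsm.
  have hlip := lip x y Zx Zy.
  rewrite enorm_leP ?mulr_ge0 ?enorm_ge0 ?(ltW L0) // exprMn enorm_sq in hlip.
  rewrite enorm_leP ?mulr_ge0 ?enorm_ge0 // exprMn sqr_sqrtr // enorm_sq.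
  apply: le_trans (eproj_nonexp Z _ _ ne cZ vZ) _.
  have E : x + h *: f x - (y + h *: f y) = (x - y) + h *: (f x - f y)
    by apply/rowP => i; rewrite !mxE; ring.
  rewrite E; move: hsm hlip (edot_ge0 (x - y)); move: (x - y) (f x - f y) => d g hsm hlip D0.
  rewrite !(edotDl, edotDr, edotZl, edotZr) (edotC g d).
  rewrite (edotC g d) in hsm.
  move: hsm hlip D0; move: (edot d d) (edot d g) (edot g g) => D X Fv hsm hlip D0.
  have a1 : h * X <= h * (- (beta * D)).
    by apply: ler_wpM2l; [exact: ltW | lra].
  have a2 : h * (h * Fv) <= h * (h * (L ^+ 2 * D)).
    by apply: ler_wpM2l; [exact: ltW | apply: ler_wpM2l => //; exact: ltW].
  have a3 : h * (h * (L ^+ 2 * D)) = h * beta * D by rewrite -hL; ring.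
  have a4 : (1 - h * beta) * D <= rho * D by rewrite ler_wpM2r // le_max lexx.
  lra.
have [p [Zp Gp]] := banach Z G q x0 cZ Zx0 ZG q0 q1 contr.
have vip y : Z y -> edot (f p) (y - p) <= 0.
  move=> Zy; have := (eproj_spec Z (p + h *: f p) ne cZ vZ).2 y Zy.
  rewrite -/(G p) Gp.
  have -> : p + h *: f p - p = h *: f p by apply/rowP => i; rewrite !mxE; ring.
  by rewrite edotZl pmulr_rle0.
pose zs := p + K *: f p.
have Ezs : zs - p = K *: f p by apply/rowP => i; rewrite !mxE; ring.
have HPzs : eproj Z zs = p.
  apply: eproj_unique => // y Zy; rewrite Ezs edotZl.
  by apply: mulr_ge0_le0; [exact: ltW | exact: vip].
have HFK : FK Z f K zs = 0.
  by rewrite /FK HPzs Ezs scalerA mulVf ?gt_eqF // scale1r subrr.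
exists zs; split => //.
- move=> z Hz.
  have [Zq Hq] := eproj_spec Z z ne cZ vZ.
  move: Hz; rewrite /FK => /eqP; rewrite subr_eq0 => /eqP Hz.
  have viq y : Z y -> edot (f (eproj Z z)) (y - eproj Z z) <= 0.
    move=> Zy; rewrite Hz edotZl; apply: mulr_ge0_le0; last exact: Hq.
    by rewrite invr_ge0 ltW.
  have Eq := vi_unique _ _ _ _ _ b0 sm Zq Zp viq vip.
  have -> : z = eproj Z z + K *: f (eproj Z z).
    by rewrite Hz scalerA divff ?gt_eqF // scale1r addrC subrK.
  by rewrite Eq.
- move=> z Tz.
  have [c c0 Hc] := fk_decay _ _ _ _ _ zs ne cZ vZ b0 L0 sm lip K0 KL.
  apply: (@traj_conv _ _ (FK Z f K) zs c c0 _ z Tz) => w; have := Hc w; rewrite HFK subr0 //.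
- by rewrite HPzs; apply: vi_equil.
- move=> zb Hzb; rewrite HPzs.
  exact: (vi_unique _ _ _ _ _ b0 sm Hzb.1 Zp (equil_vi _ _ _ Hzb) vip).
Qed.
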